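(* The variety $\mathbf{M}_1$ of regular pseudocomplemented de Morgan algebras of range $1$ is locally finite.
   Context: A pseudocomplemented de Morgan algebra is $(L;\wedge,\vee,{}^\ast,{}^\prime,0,1)$ with $(L;\wedge,\vee,0,1)$ a bounded distributive lattice, ${}^\ast$ the pseudocomplement and ${}^\prime$ a de Morgan involution. $\mathbf{M}_1$ is the variety of such algebras satisfying $x\wedge x^{\prime\ast\prime}\le y\vee y^\ast$ (regularity) and $(x\wedge x^{\prime\ast})^{\prime\ast}=(x\wedge x^{\prime\ast})^{\prime\ast\prime\ast}$ (range $1$). *)

(* Defs.v *)
From HB Require Import structures.
From mathcomp Require Import all_boot all_order.
Set Implicit Arguments. Unset Strict Implicit. Unset Printing Implicit Defensive.
Import Order.Theory.
Local Open Scope order_scope.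

Definition is_pseudocomplement {d} {T : tbDistrLatticeType d} (star : T -> T) :=
  forall x y : T, x `&` y = \bot <-> y <= star x.

Definition is_deMorgan_involution {d} {T : tbDistrLatticeType d} (prime : T -> T) :=
  (forall x : T, prime (prime x) = x) /\
  (forall x y : T, prime (x `|` y) = prime x `&` prime y).

Definition pcdm {d} {T : tbDistrLatticeType d} (star prime : T -> T) :=
  is_pseudocomplement star /\ is_deMorgan_involution prime.

Definition in_M1 {d} {T : tbDistrLatticeType d} (star prime : T -> T) :=
  pcdm star prime /\
  (forall x y : T, x `&` prime (star (prime x)) <= y `|` star y) /\
  (forall x : T,
     star (prime (x `&` star (prime x))) =
     star (prime (star (prime (x `&` star (prime x)))))).

Inductive generated {d} {T : tbDistrLatticeType d} (star prime : T -> T)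
    (s : seq T) : T -> Prop :=
  | gen_base x : x \in s -> generated star prime s x
  | gen_bot : generated star prime s \bot
  | gen_top : generated star prime s \top
  | gen_meet x y : generated star prime s x -> generated star prime s y ->
      generated star prime s (x `&` y)
  | gen_join x y : generated star prime s x -> generated star prime s y ->
      generated star prime s (x `|` y)
  | gen_star x : generated star prime s x -> generated star prime s (star x)
  | gen_prime x : generated star prime s x -> generated star prime s (prime x).

Definition locally_finite_M1 : Prop :=
  forall d (T : tbDistrLatticeType d) (star prime : T -> T),
    in_M1 star prime ->
    forall s : seq T, exists l : seq T,
      forall x, generated star prime s x -> x \in l.

(* Main.v *)
Require Import Defs.
From HB Require Import structures.
From mathcomp Require Import all_boot all_order.
From Stdlib Require Import Classical.
Set Implicit Arguments. Unset Strict Implicit. Unset Printing Implicit Defensive.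
Import Order.Theory.
Local Open Scope order_scope.

Ltac mle := first
 [ done
 | assumption
 | apply: lexx
 | match goal with |- is_true (_ <= _ `&` _) => rewrite lexI; apply/andP; split; mle end
 | apply: leIxl; mle
 | apply: leIxr; mle ].

Lemma fin_cover (U V : eqType) (P : U -> Prop) (phi : U -> V) (L : seq V) :
  (forall x y, P x -> P y -> phi x = phi y -> x = y) ->
  (forall x, P x -> phi x \in L) -> exists l : seq U, forall x, P x -> x \in l.
Proof.
elim: L P => [|v L IH] P inj hL.
  by exists [::] => x Px; have := hL x Px.
case: (classic (exists x, P x /\ phi x = v)) => [[x0 [P0 e0]]|nx].
  have hL' : forall x, P x /\ phi x != v -> phi x \in L.
    by move=> x [Px nx']; have := hL x Px; rewrite inE (negbTE nx').
  have [l hl] := IH (fun x => P x /\ phi x != v)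
    (fun x y hx hy => inj x y hx.1 hy.1) hL'.
  exists (x0 :: l) => x Px; rewrite inE.
  case: (eqVneq (phi x) v) => e.
    by apply/orP; left; apply/eqP; apply: inj => //; rewrite e e0.
  by apply/orP; right; apply: hl.
apply: IH => // x Px; have := hL x Px; rewrite inE.
case: eqP => // e _; case: nx; by exists x.
Qed.

Section Basic.
Variables (d : Order.disp_t) (T : tbDistrLatticeType d) (st pr : T -> T).
Hypothesis Hpc : forall x y : T, x `&` y = \bot <-> y <= st x.
Hypothesis Hinv : forall x : T, pr (pr x) = x.
Hypothesis HpU : forall x y : T, pr (x `|` y) = pr x `&` pr y.

Lemma eq0 (x : T) : x <= \bot -> x = \bot.
Proof. by move=> h; apply/le_anti; rewrite h le0x. Qed.

Lemma meet_st x : x `&` st x = \bot.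
Proof. by apply/Hpc. Qed.

Lemma le_st x y : x `&` y = \bot -> y <= st x.
Proof. by move/Hpc. Qed.

Lemma st_le x y : y <= st x -> x `&` y = \bot.
Proof. by move/Hpc. Qed.

Lemma le_ss x : x <= st (st x).
Proof. by apply: le_st; rewrite meetC meet_st. Qed.

Lemma st_anti x y : x <= y -> st y <= st x.
Proof.
move=> xy; apply: le_st; apply: eq0.
by rewrite -(meet_st y) leI2.
Qed.

Lemma sss x : st (st (st x)) = st x.
Proof. by apply/le_anti; rewrite le_ss st_anti // le_ss. Qed.

Lemma st0 : st \bot = \top.
Proof. by apply/le_anti; rewrite lex1 le_st // meet0x. Qed.

Lemma st1 : st \top = \bot.
Proof. by rewrite -(meet_st \top) meet1x. Qed.

Lemma stU x y : st (x `|` y) = st x `&` st y.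
Proof.
apply/le_anti; rewrite lexI !st_anti ?leUl ?leUr //=.
apply: le_st; rewrite meetUl; apply/eq0; rewrite leUx; apply/andP; split.
  by rewrite meetA meet_st meet0x.
by rewrite meetCA meet_st meetx0.
Qed.

Lemma stI x y : st (x `&` y) = st (st (st x) `&` st (st y)).
Proof.
apply/le_anti; apply/andP; split; last first.
  by apply: st_anti; apply: leI2; apply: le_ss.
apply: le_st; set a := st (x `&` y).
have h0 : a `&` (x `&` y) = \bot by rewrite meetC meet_st.
have h1 : a `&` x <= st y by apply: le_st; rewrite meetC -meetA h0.
have h2 : a `&` st (st y) <= st x.
  apply: le_st; apply: eq0.
  by rewrite meetCA meetA -(meet_st (st y)) leI2 // meetC.
apply: eq0; rewrite meetC meetCA meetC -(meet_st (st x)) leI2 //.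
Qed.

Lemma ssI x y : st (st (x `&` y)) = st (st x) `&` st (st y).
Proof.
apply/le_anti; rewrite lexI !st_anti ?st_anti ?leIl ?leIr //=.
by rewrite stI le_ss.
Qed.

Lemma pr_anti x y : x <= y -> pr y <= pr x.
Proof. by move=> /join_idPl; rewrite joinC => <-; rewrite HpU leIl. Qed.

Lemma pr_le x y : (pr x <= pr y) = (y <= x).
Proof.
apply/idP/idP; last exact: pr_anti.
by move=> /pr_anti; rewrite !Hinv.
Qed.

Lemma prI x y : pr (x `&` y) = pr x `|` pr y.
Proof. by rewrite -[pr x `|` _]Hinv HpU !Hinv. Qed.

Lemma pr0 : pr \bot = \top.
Proof.
apply/le_anti; rewrite lex1 /=.
by rewrite -[\top]Hinv pr_anti // le0x.
Qed.

Lemma pr1 : pr \top = \bot.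
Proof. by rewrite -pr0 Hinv. Qed.

Definition f x := st (pr x).

Lemma fI x y : f (x `&` y) = f x `&` f y.
Proof. by rewrite /f prI stU. Qed.

Lemma f_mono x y : x <= y -> f x <= f y.
Proof. by move=> h; rewrite /f st_anti // pr_anti. Qed.

Lemma f1 : f \top = \top.
Proof. by rewrite /f pr1 st0. Qed.

Lemma f0 : f \bot = \bot.
Proof. by rewrite /f pr0 st1. Qed.

Lemma f_sk x : st (st (f x)) = f x.
Proof. by rewrite /f sss. Qed.

Lemma f_pr x : f (pr x) = st x.
Proof. by rewrite /f Hinv. Qed.

Lemma sym x y : x <= f (st y) -> y <= f (st x).
Proof.
rewrite /f => /st_le; rewrite meetC => /le_st h.
have h' : pr (st x) <= st y by rewrite -pr_le Hinv.
by apply: le_st; rewrite meetC; apply: st_le.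
Qed.


Hypothesis Hrange : forall x,
  st (pr (x `&` st (pr x))) = st (pr (st (pr (x `&` st (pr x))))).

Lemma range' x : f x `&` f (f x) = f (f x) `&` f (f (f x)).
Proof. have h : f (x `&` f x) = f (f (x `&` f x)) := Hrange x. by rewrite !fI in h. Qed.

Definition u w := w `&` f w.
Definition K a := a `&` f (st a).
Definition isZ z := f z = z /\ f (st z) = st z.
Definition sk x := st (st x) = x.

Lemma sk_st x : sk (st x). Proof. exact: sss. Qed.
Lemma sk_f x : sk (f x). Proof. exact: f_sk. Qed.
Lemma sk_meet x y : sk x -> sk y -> sk (x `&` y).
Proof. by rewrite /sk ssI => -> ->. Qed.
Lemma sk_top : sk \top. Proof. by rewrite /sk st1 st0. Qed.

Lemma Z_sk z : isZ z -> sk z.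
Proof. by case=> fz _; rewrite -fz; apply: sk_f. Qed.

Lemma Z_st z : isZ z -> isZ (st z).
Proof.
move=> Hz; have skz := Z_sk Hz; case: Hz => fz fsz.
by split => //; rewrite skz.
Qed.

Lemma Z_top : isZ \top.
Proof. by split; rewrite ?f1 // st1 f0. Qed.

Lemma lin x z : sk x -> isZ z -> f (st (st x `&` st z)) = st (st (f x) `&` st z).
Proof.
move=> skx [fz fsz]; set j := st (st x `&` st z).
have xj : x <= j.
  by apply: le_st; apply: eq0; rewrite meetAC (meetC (st x)) meet_st meet0x.
have zj : z <= j.
  by apply: le_st; apply: eq0; rewrite -meetA (meetC (st z)) meet_st meetx0.
apply/le_anti/andP; split.
  have h : f j `&` st z <= f x.
    rewrite -fsz -fI; apply: f_mono.
    rewrite -[X in _ <= X]skx; apply: le_st.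
    by rewrite meetCA meetC meet_st.
  apply: le_st; apply: eq0; rewrite -(meet_st (f x)) meetC.
  rewrite lexI; apply/andP; split; first by apply: le_trans h; mle.
  mle.
rewrite -(f_sk j); apply: st_anti; rewrite lexI; apply/andP; split; apply: st_anti.
  exact: f_mono.
by rewrite -fz; apply: f_mono.
Qed.

Lemma Z_meet z1 z2 : isZ z1 -> isZ z2 -> isZ (z1 `&` z2).
Proof.
move=> H1 H2; have sk1 := Z_sk H1; have sk2 := Z_sk H2.
have h := lin (sk_st z1) (Z_st H2).
case: H1 => fz1 fsz1; case: H2 => fz2 fsz2.
split; first by rewrite fI fz1 fz2.
by rewrite sk1 sk2 fsz1 sk1 in h.
Qed.

Lemma Zu x : isZ (u (f x)).
Proof.
set w := f x.
have fuw : f (u w) = u w by rewrite /u fI /w -range'.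
split => //.
have skuw : st (st (u w)) = u w by rewrite -{1}fuw f_sk fuw.
apply/le_anti/andP; split.
  by apply: le_st; rewrite -{1}fuw -fI meet_st f0.
by apply: sym; rewrite skuw fuw.
Qed.

Lemma Zu_st b : isZ (u (st b)).
Proof. by rewrite -f_pr; apply: Zu. Qed.

Lemma splitL a y : sk a -> a = st (st (st y `&` a) `&` st (y `&` a)).
Proof.
move=> ska; set P := st (st y `&` a); set Q := st (y `&` a).
apply/le_anti/andP; split; last first.
  suff h : st (P `&` Q) <= st (st a) by rewrite ska in h.
  apply: st_anti; rewrite lexI; apply/andP; split; apply: st_anti; apply: leIr.
apply: le_st.
have h1 : (P `&` Q) `&` a <= st y.
  apply: le_st; apply: eq0; rewrite -(meet_st (y `&` a)); mle.
apply: eq0; rewrite -(meet_st (st y `&` a)); mle.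
Qed.

Lemma f_st_formula b : f (st b) = st (st (u (st b)) `&` st (K b)).
Proof. rewrite /u /K; exact: (splitL _ (sk_f _)). Qed.

Lemma K_le a b : b <= K a -> b <= a -> K b = b.
Proof.
move=> h1 h2; apply/meet_idPl; apply: le_trans h1 _.
by apply: le_trans (leIr _ _) _; apply: f_mono; apply: st_anti.
Qed.

Lemma K0 : K \bot = \bot.
Proof. by rewrite /K meet0x. Qed.

Lemma K_e0 a : K (a `&` st (K a)) = \bot.
Proof.
set e := a `&` st (K a).
have h1 : K a <= f (st a) by apply: leIr.
have h2 : a <= f (st (K a)) by apply: sym.
have h3 : st (K a `|` e) <= st a.
  by apply: le_st; rewrite stU meetA meet_st.
have h4 : K e <= f (st a).
  apply: le_trans (f_mono h3); rewrite stU fI lexI; apply/andP; split.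
    apply: le_trans h2; rewrite /K /e; mle.
  exact: leIr.
apply: eq0; rewrite -(meet_st (K a)).
have h5 : K e <= a by rewrite /K /e; mle.
have h6 : K e <= st (K a) by rewrite /K /e; mle.
rewrite lexI h6 andbT {2}/K lexI h5 h4 //.
Qed.

Section Atoms.
Variables (A : finType) (atom : A -> T).
Definition disjA := forall a b, a != b -> atom a `&` atom b = \bot.
Definition coverA := forall x, (forall a, x `&` atom a = \bot) -> x = \bot.
Definition E (Sf : {ffun A -> bool}) := \meet_(a | ~~ Sf a) st (atom a).
Definition Cl q := exists Sf, q = E Sf.

Lemma E_meet Sf Sf' : E Sf `&` E Sf' = E [ffun a => Sf a && Sf' a].
Proof.
apply/le_anti/andP; split.
  apply/meetsP => a; rewrite ffunE negb_and => /orP[h|h].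
    by apply: leIxl; apply: meets_inf.
  by apply: leIxr; apply: meets_inf.
rewrite lexI; apply/andP; split; apply/meetsP => a h; apply: meets_inf.
  by rewrite ffunE negb_and h.
by rewrite ffunE negb_and h orbT.
Qed.

Lemma E_top : E [ffun => true] = \top.
Proof. by apply/le_anti; rewrite lex1 /=; apply/meetsP => a; rewrite ffunE. Qed.

Hypothesis dj : disjA.
Hypothesis cv : coverA.

Lemma E_st Sf : st (E Sf) = E [ffun a => ~~ Sf a].
Proof.
apply/le_anti/andP; split.
  apply/meetsP => a; rewrite ffunE negbK => Sa; apply: st_anti.
  apply/meetsP => b nSb; apply: le_st; apply: dj.
  by apply/eqP => ba; rewrite ba Sa in nSb.
apply: le_st; apply: cv => a; apply: eq0.
rewrite -(meet_st (atom a)); case Sa: (Sf a).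
  have h : E [ffun a => ~~ Sf a] <= st (atom a) by apply: meets_inf; rewrite ffunE Sa.
  mle.
have h : E Sf <= st (atom a) by apply: meets_inf; rewrite Sa.
mle.
Qed.

Lemma Cl_top : Cl \top.
Proof. by exists [ffun => true]; rewrite E_top. Qed.

Lemma Cl_meet x y : Cl x -> Cl y -> Cl (x `&` y).
Proof. by case=> Sf -> [Sf' ->]; exists [ffun a => Sf a && Sf' a]; rewrite E_meet. Qed.

Lemma Cl_st x : Cl x -> Cl (st x).
Proof. by case=> Sf ->; exists [ffun a => ~~ Sf a]; rewrite E_st. Qed.

Lemma Cl_bot : Cl \bot.
Proof. by rewrite -st1; apply: Cl_st; apply: Cl_top. Qed.

Lemma Cl_bigmeet (I : finType) (P : pred I) (F : I -> T) :
  (forall i, Cl (F i)) -> Cl (\meet_(i | P i) F i).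
Proof.
move=> h; apply: (big_ind Cl); [exact: Cl_top | exact: Cl_meet | move=> i _; exact: h].
Qed.

Lemma Cl_decide g : sk g -> (forall a, atom a <= g \/ atom a <= st g) -> Cl g.
Proof.
move=> skg H; exists [ffun a => atom a <= g]; apply/le_anti/andP; split.
  apply/meetsP => a; rewrite ffunE => h.
  case: (H a) => ha; first by rewrite ha in h.
  by apply: le_st; rewrite meetC; apply: st_le.
suff: E [ffun a => atom a <= g] <= st (st g) by rewrite skg.
apply: le_st; apply: cv => a; apply: eq0.
case: (boolP (atom a <= g)) => h.
  rewrite -(meet_st g); mle.
have hE : E [ffun a => atom a <= g] <= st (atom a) by apply: meets_inf; rewrite ffunE.
rewrite -(meet_st (atom a)); mle.
Qed.

Definition ClL := [seq E Sf | Sf <- enum {ffun A -> bool}].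
Lemma Cl_fin q : Cl q -> q \in ClL.
Proof. by case=> Sf ->; apply/map_f; rewrite mem_enum. Qed.

End Atoms.

Definition lit (b : bool) x := if b then x else st x.

Lemma lit_disj b c x : b != c -> lit b x `&` lit c x = \bot.
Proof. by case: b; case: c => //= _; rewrite ?meet_st // meetC meet_st. Qed.

Lemma lit_sk b x : sk x -> sk (lit b x).
Proof. by case: b => //= _; apply: sk_st. Qed.

Section SV.
Variables (I : finType) (gen : I -> T).
Definition atomSV (s : {ffun I -> bool}) := \meet_(i <- enum I) lit (s i) (gen i).

Lemma atomSV_le s i : atomSV s <= lit (s i) (gen i).
Proof. by apply: meets_inf_seq; rewrite ?mem_enum. Qed.

Lemma SV_disj : disjA atomSV.
Proof.
move=> s r ne.
case: (boolP [exists i, s i != r i]) => [/existsP [i hi]|].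
  apply: eq0; rewrite -(lit_disj (gen i) hi); apply: leI2; apply: atomSV_le.
rewrite negb_exists => /forallP h; move/negP: ne; case.
by apply/eqP/ffunP => i; apply/eqP/negbNE/h.
Qed.

Lemma cover_seq r : uniq r -> forall x,
  (forall s : {ffun I -> bool}, x `&` \meet_(i <- r) lit (s i) (gen i) = \bot) -> x = \bot.
Proof.
elim: r => [|i r IH] /=.
  by move=> _ x h; have := h [ffun => true]; rewrite big_nil meetx1.
case/andP => ir ur x h.
have hg : forall b, x `&` lit b (gen i) = \bot.
  move=> b; apply: IH => // s.
  have := h [ffun j => if j == i then b else s j].
  rewrite big_cons ffunE eqxx.
  rewrite (@eq_big_seq _ _ _ _ _ _ (fun j => lit (s j) (gen j))).
    by rewrite meetA.
  move=> j jr; rewrite ffunE; case: eqP => // ji.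
  by rewrite -ji jr in ir.
have a1 : x <= st (gen i) by apply: le_st; rewrite meetC (hg true).
have a2 : x <= st (st (gen i)) by apply: le_st; rewrite meetC (hg false).
by apply: eq0; rewrite -(meet_st (st (gen i))) lexI a1 a2.
Qed.

Lemma SV_cover : coverA atomSV.
Proof. by move=> x h; apply: (cover_seq (enum_uniq _)) => s; apply: h. Qed.

Lemma SV_ind (P : T -> Prop) : P \top -> (forall x y, P x -> P y -> P (x `&` y)) ->
  (forall b i, P (lit b (gen i))) -> forall s, P (atomSV s).
Proof. by move=> Pt Pm Pl s; apply: (big_ind P) => // i _; apply: Pl. Qed.

End SV.

Section Prod.
Variables (A1 A2 : finType) (at1 : A1 -> T) (at2 : A2 -> T).
Definition atomP (p : A1 * A2) := at1 p.1 `&` at2 p.2.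

Lemma P_disj : disjA at1 -> disjA at2 -> disjA atomP.
Proof.
move=> d1 d2 [a1 a2] [b1 b2] ne; rewrite /atomP /=.
case: (eqVneq a1 b1) => [e1|n1].
  have n2 : a2 != b2 by apply: contraNneq ne => ->; rewrite e1.
  by apply: eq0; rewrite -(d2 _ _ n2); mle.
by apply: eq0; rewrite -(d1 _ _ n1); mle.
Qed.

Lemma P_cover : coverA at1 -> coverA at2 -> coverA atomP.
Proof.
move=> c1 c2 x h; apply: c1 => a1; apply: c2 => a2.
by rewrite -meetA; apply: (h (a1, a2)).
Qed.
End Prod.

Hypothesis Hreg : forall x y : T, x `&` pr (st (pr x)) <= y `|` st y.

Lemma joinplus y : y `|` pr (f y) = \top.
Proof.
have h : pr (y `|` pr (f y)) = \bot by rewrite HpU Hinv /f meet_st.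
by rewrite -[LHS]Hinv h pr0.
Qed.

Lemma inj_le x y : st x = st y -> f x = f y -> x <= y.
Proof.
move=> e1 e2.
have h := Hreg x y; rewrite -e1 in h.
have h2 : x `&` pr (st (pr x)) <= y.
  have : x `&` pr (st (pr x)) <= x `&` (y `|` st x) by rewrite lexI leIl h.
  rewrite meetUr meet_st joinx0 => /le_trans; apply; exact: leIr.
rewrite -[x]meetx1 -(joinplus y) meetUr leUx leIr /= -e2.
exact: h2.
Qed.

Lemma injSF x y : st x = st y -> f x = f y -> x = y.
Proof. by move=> e1 e2; apply/le_anti; rewrite !inj_le. Qed.

Section Constr.
Variable s : seq T.

Definition gen0 (p : 'I_(size s) * bool) :=
  if p.2 then f (nth \bot s p.1) else st (nth \bot s p.1).
Definition al0 := atomSV gen0.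
Definition genK (r : {ffun ('I_(size s) * bool) -> bool}) := K (al0 r).
Definition ka := atomSV genK.
Definition be := atomP al0 ka.
Definition genZ p := u (st (be p)).
Definition ze := atomSV genZ.
Definition atG := atomP be ze.
Definition ClG := Cl atG.

Lemma dG : disjA atG.
Proof. exact: (P_disj (P_disj (@SV_disj _ _) (@SV_disj _ _)) (@SV_disj _ _)). Qed.
Lemma cG : coverA atG.
Proof. exact: (P_cover (P_cover (@SV_cover _ _) (@SV_cover _ _)) (@SV_cover _ _)). Qed.

Lemma sk0 i : sk (gen0 i).
Proof. by rewrite /gen0; case: i.2; [apply: sk_f | apply: sk_st]. Qed.

Lemma sk_SV (I : finType) (gen : I -> T) : (forall i, sk (gen i)) -> forall r, sk (atomSV gen r).
Proof.
move=> h; apply: SV_ind; [exact: sk_top | exact: sk_meet | move=> b i; exact: lit_sk].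
Qed.

Lemma sk_al0 r : sk (al0 r). Proof. exact: (sk_SV sk0 r). Qed.
Lemma skK r : sk (genK r). Proof. exact: sk_meet (sk_al0 _) (sk_f _). Qed.
Lemma sk_ka r : sk (ka r). Proof. exact: (sk_SV skK r). Qed.
Lemma sk_be p : sk (be p). Proof. exact: sk_meet (sk_al0 _) (sk_ka _). Qed.
Lemma skZ p : sk (genZ p). Proof. exact: sk_meet (sk_st _) (sk_f _). Qed.
Lemma sk_ze r : sk (ze r). Proof. exact: (sk_SV skZ r). Qed.

Lemma dec_lit x g b : x <= lit b g -> x <= g \/ x <= st g.
Proof. by case: b => h; [left | right]. Qed.

Lemma ClG_gen0 i : ClG (gen0 i).
Proof.
apply: (Cl_decide cG (sk0 i)) => q; apply: (@dec_lit _ _ (q.1.1 i)).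
apply: le_trans (atomSV_le _ _ _); rewrite /atG /atomP /be /atomP; mle.
Qed.

Lemma ClG_genK i : ClG (genK i).
Proof.
apply: (Cl_decide cG (skK i)) => q; apply: (@dec_lit _ _ (q.1.2 i)).
apply: le_trans (atomSV_le _ _ _); rewrite /atG /atomP /be /atomP; mle.
Qed.

Lemma ClG_genZ i : ClG (genZ i).
Proof.
apply: (Cl_decide cG (skZ i)) => q; apply: (@dec_lit _ _ (q.2 i)).
apply: le_trans (atomSV_le _ _ _); rewrite /atG /atomP /be /atomP; mle.
Qed.

Lemma ClG_SV (I : finType) (gen : I -> T) : (forall i, ClG (gen i)) -> forall r, ClG (atomSV gen r).
Proof.
move=> h; apply: SV_ind; [exact: Cl_top | exact: Cl_meet | ].
by move=> [] i /=; [apply: h | apply: (Cl_st dG cG); apply: h].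
Qed.

Lemma ClG_be p : ClG (be p).
Proof. apply: Cl_meet; [exact: (ClG_SV ClG_gen0 _) | exact: (ClG_SV ClG_genK _)]. Qed.

Lemma ClG_ze r : ClG (ze r).
Proof. exact: (ClG_SV ClG_genZ r). Qed.

Lemma Z_ze r : isZ (ze r).
Proof.
apply: SV_ind; [exact: Z_top | exact: Z_meet | ].
by move=> [] i /=; [apply: Zu_st | apply: Z_st; apply: Zu_st].
Qed.

Lemma K_be p : K (be p) = be p \/ K (be p) = \bot.
Proof.
case: p => sg tau; rewrite /be /atomP /=.
case ht: (tau sg).
  left; apply: (@K_le (al0 sg)); last exact: leIl.
  apply: le_trans (leIr _ _) _.
  by have := atomSV_le genK tau sg; rewrite ht.
right.
case: (boolP [exists r, (r != sg) && tau r]) => [/existsP [r /andP [nr tr]]|hn].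
  have hb : al0 sg `&` ka tau = \bot.
    apply: eq0; rewrite -(@SV_disj _ gen0 _ _ nr) meetC; apply: leI2 => //.
    apply: le_trans (atomSV_le genK tau r) _; rewrite tr /=; exact: leIl.
  by rewrite hb K0.
have hb : al0 sg `&` ka tau = al0 sg `&` st (K (al0 sg)).
  apply/le_anti/andP; split.
    rewrite lexI leIl /=; apply: le_trans (leIr _ _) _.
    by have := atomSV_le genK tau sg; rewrite ht.
  rewrite lexI leIl /=; apply/meetsP_seq => r _ _.
  case: (eqVneq r sg) => [->|nr]; first by rewrite ht; apply: leIr.
  have tr : tau r = false.
    move: hn; rewrite negb_exists => /forallP /(_ r); rewrite nr /=.
    by move/negbTE.
  rewrite tr /=; apply: leIxl; apply: le_st; apply: eq0.
  rewrite -(@SV_disj _ gen0 _ _ nr); apply: leI2 => //; exact: leIl.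
by rewrite hb K_e0.
Qed.

Lemma f_st_atG q : ClG (f (st (atG q))).
Proof.
case: q => p r; rewrite /atG /atomP /=.
have e : st (be p `&` ze r) = st (st (st (be p)) `&` st (st (ze r))).
  have h1 : st (st (be p)) = be p := sk_be p.
  have h2 : st (st (ze r)) = ze r := sk_ze r.
  by rewrite h1 h2.
rewrite e lin.
apply: (Cl_st dG cG); apply: Cl_meet; last by do 2 apply: (Cl_st dG cG); apply: ClG_ze.
apply: (Cl_st dG cG); rewrite f_st_formula; apply: (Cl_st dG cG); apply: Cl_meet.
  by apply: (Cl_st dG cG); apply: ClG_genZ.
apply: (Cl_st dG cG); case: (K_be p) => ->; [exact: ClG_be | exact: Cl_bot dG cG].
  exact: sk_st.
exact: Z_st (Z_ze r).
Qed.

Lemma ClG_f q : ClG q -> ClG (f q).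
Proof.
case=> Sf ->; rewrite /E (big_morph f fI f1).
by apply: Cl_bigmeet => a; apply: f_st_atG.
Qed.

Lemma gen_Cl x : generated st pr s x -> ClG (st x) /\ ClG (f x).
Proof.
elim => {x}.
- move=> x xs; have hi : (index x s < size s)%N by rewrite index_mem.
  have := ClG_gen0 (Ordinal hi, false); have := ClG_gen0 (Ordinal hi, true).
  by rewrite /gen0 /= nth_index.
- by rewrite st0 f0; split; [exact: Cl_top | exact: Cl_bot dG cG].
- by rewrite st1 f1; split; [exact: Cl_bot dG cG | exact: Cl_top].
- move=> x y _ [sx fx] _ [sy fy]; split; last by rewrite fI; apply: Cl_meet.
  by rewrite stI; apply: (Cl_st dG cG); apply: Cl_meet; apply: (Cl_st dG cG).
- move=> x y _ [sx fx] _ [sy fy]; split; first by rewrite stU; apply: Cl_meet.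
  have -> : f (x `|` y) = st (st (f x) `&` st (f y)) by rewrite /f HpU stI.
  by apply: (Cl_st dG cG); apply: Cl_meet; apply: (Cl_st dG cG).
- move=> x _ [sx fx]; split; first exact: (Cl_st dG cG).
  exact: ClG_f.
- move=> x _ [sx fx]; split; first exact: fx.
  by rewrite f_pr.
Qed.

End Constr.

Lemma main_sec (s : seq T) : exists l : seq T, forall x, generated st pr s x -> x \in l.
Proof.
have := @fin_cover T (prod T T) (generated st pr s) (fun x => (st x, f x))
  [seq (a, b) | a <- ClL (atG (s:=s)), b <- ClL (atG (s:=s))].
move=> H; apply: H.
  by move=> x y _ _ [e1 e2]; apply: injSF.
move=> x gx; have [h1 h2] := gen_Cl gx.
by apply/allpairsP; exists (st x, f x); split => //=; apply: Cl_fin.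
Qed.
End Basic.

Theorem theorem4p10 :
  forall d (T : tbDistrLatticeType d) (star prime : T -> T),
    in_M1 star prime ->
    forall s : seq T, exists l : seq T,
      forall x, generated star prime s x -> x \in l.
Proof.
move=> d T star prime [[Hpc [Hinv HpU]] [Hreg Hrange]] s.
exact: (main_sec Hpc Hinv HpU Hrange Hreg s).
Qed.
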